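(* Every binary orchard network $N$ admits an HGT-consistent labelling $t$ with the following additional property: whenever two distinct nodes $a,b$ of $N$ satisfy $t(a)=t(b)$, one of them is a parent of the other, the parent being a tree node and the child being a reticulation.
   Context: A (directed phylogenetic) network on a finite taxa set $X$ is a directed acyclic graph without parallel arcs whose nodes are of the following types: a unique root (indegree 0, outdegree 1); tree nodes (indegree 1, outdegree at least 2); reticulations (indegree at least 2, outdegree 1); leaves (indegree 1, outdegree 0), the leaves being bijectively labelled by $X$. Non-leaf nodes are called internal. A network is binary if every tree node and every reticulation has total degree (indegree plus outdegree) exactly 3. A tree is a network without reticulations. Orchard networks: An ordered pair of leaves $(x,y)$ is a cherry if $x$ and $y$ have a common parent; it is a reticulated cherry if the parent $p_x$ of $x$ is a reticulation and $p_x$ and $y$ have a common parent. Let $p_x,p_y$ be the parents of $x,y$. Reducing $(x,y)$ in a network $N$: if $(x,y)$ is a cherry, delete $x$ and suppress $p_x$ if it now has indegree 1 and outdegree 1; if $(x,y)$ is a reticulated cherry, delete the arc $(p_y,p_x)$ and suppress any resulting node of indegree 1 and outdegree 1; otherwise do nothing. (Suppressing a node $v$ with one parent $u$ and one child $w$ means deleting $v$ and adding the arc $(u,w)$.) For a sequence $S$ of ordered pairs, $NS$ denotes the result of reducing the pairs of $S$ in order. $N$ is orchard if there is a sequence $S$ such that $NS$ is a tree with exactly one leaf. HGT-consistent labelling: Let $N$ be a binary network with node set $V$. An HGT-consistent labelling of $N$ is a map $t:V\to\mathbb{R}$ such that (1) for every arc $(u,v)$, $t(u)\le t(v)$, and equality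 is allowed only if $v$ is a reticulation; (2) every internal node $u$ has a child $v$ with $t(u)<t(v)$; (3) for every reticulation $r$ with parents $u$ and $v$, exactly one of $t(u)=t(r)$ and $t(v)=t(r)$ holds. *)

(* Defs.v *)
From mathcomp Require Import all_boot.
From Stdlib Require Import Reals.
Set Implicit Arguments. Unset Strict Implicit. Unset Printing Implicit Defensive.

(* A (possibly partially deleted) directed graph living inside a finite
   universe V of node names: the present nodes and the arc relation. *)
Record net (V : finType) := Net { nodes : {set V}; narc : rel V }.

Section Net.
Variable V : finType.
Implicit Types (N : net V) (u v w x y : V).

Definition indeg N v : nat := #|[set u | narc N u v]|.
Definition outdeg N v : nat := #|[set w | narc N v w]|.

Definition is_root N v : bool :=
  [&& v \in nodes N, indeg N v == 0 & outdeg N v == 1].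
Definition is_tree_node N v : bool :=
  [&& v \in nodes N, indeg N v == 1 & 2 <= outdeg N v].
Definition is_ret N v : bool :=
  [&& v \in nodes N, 2 <= indeg N v & outdeg N v == 1].
Definition is_leaf N v : bool :=
  [&& v \in nodes N, indeg N v == 1 & outdeg N v == 0].

(* Directed phylogenetic network (leaves are identified with their taxa). *)
Definition is_network N : Prop :=
  (forall u v, narc N u v -> u \in nodes N /\ v \in nodes N) /\
  (forall u v, narc N u v -> ~~ connect (narc N) v u) /\
  (forall v, v \in nodes N ->
     [|| is_root N v, is_tree_node N v, is_ret N v | is_leaf N v]) /\
  (exists r, is_root N r /\ forall r', is_root N r' -> r' = r).

Definition binary N : Prop :=
  forall v, is_tree_node N v || is_ret N v -> indeg N v + outdeg N v = 3.

Definition is_tree N : Prop :=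
  is_network N /\ forall v, ~~ is_ret N v.

Definition suppress N v : net V :=
  match [pick u | narc N u v], [pick w | narc N v w] with
  | Some u, Some w =>
      if [&& v \in nodes N, indeg N v == 1 & outdeg N v == 1] then
        Net (nodes N :\ v)
            (fun a b => (narc N a b && (a != v) && (b != v)) || ((a == u) && (b == w)))
      else N
  | _, _ => N
  end.

Definition del_node N x : net V :=
  Net (nodes N :\ x) (fun a b => narc N a b && (a != x) && (b != x)).

Definition del_arc N p q : net V :=
  Net (nodes N) (fun a b => narc N a b && ((a, b) != (p, q))).

Definition parent N x : option V := [pick p | narc N p x].

Definition reduce N (xy : V * V) : net V :=
  let (x, y) := xy in
  match parent N x, parent N y with
  | Some px, Some py =>
      if [&& is_leaf N x, is_leaf N y & x != y] then
        if px == py then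
          suppress (del_node N x) px
        else if is_ret N px && narc N py px then
          suppress (suppress (del_arc N py px) py) px
        else N
      else N
  | _, _ => N
  end.

Definition reduce_seq N (S : seq (V * V)) : net V := foldl reduce N S.

Definition orchard N : Prop :=
  exists S : seq (V * V),
    is_tree (reduce_seq N S) /\ #|[set v | is_leaf (reduce_seq N S) v]| = 1.

Definition HGT_consistent N (t : V -> R) : Prop :=
  (forall u v, narc N u v -> (t u <= t v)%R /\ (t u = t v -> is_ret N v)) /\
  (forall u, u \in nodes N -> ~~ is_leaf N u ->
     exists v, narc N u v /\ (t u < t v)%R) /\
  (forall r u v, is_ret N r -> narc N u r -> narc N v r -> u <> v ->
     (t u = t r <-> ~ (t v = t r))).

End Net.

(* Main.v *)
Require Import Defs.
From mathcomp Require Import all_boot.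
From Stdlib Require Import Reals Lra.
From mathcomp Require Import zify.
Set Implicit Arguments. Unset Strict Implicit. Unset Printing Implicit Defensive.

Definition good (V : finType) (N : net V) := is_network N /\ binary N.

Definition Label (V : finType) (N : net V) (t : V -> R) : Prop :=
  HGT_consistent N t /\
  (forall a b : V, a \in nodes N -> b \in nodes N -> a <> b -> t a = t b ->
       (narc N a b /\ is_tree_node N a /\ is_ret N b) \/
       (narc N b a /\ is_tree_node N b /\ is_ret N a)) /\
  (forall a b : V, a \in nodes N -> b \in nodes N -> is_leaf N a -> ~~ is_leaf N b ->
       (t b < t a)%R).

Lemma seq_upper (V : eqType) (f : V -> R) (s : seq V) :
  exists M, forall v, v \in s -> (f v < M)%R.
Proof.
elim: s => [|a s [M HM]]; first by exists 0%R.
exists (Rmax M (f a + 1)) => v; rewrite in_cons => /orP [/eqP ->|/HM H].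
- have := Rmax_r M (f a + 1); lra.
- have := Rmax_l M (f a + 1); lra.
Qed.

Lemma seq_fresh (V : eqType) (f : V -> R) (s : seq V) :
  forall lo hi, (lo < hi)%R -> exists z, (lo < z < hi)%R /\ forall v, v \in s -> f v <> z.
Proof.
elim: s => [|a s IH] lo hi Hlh.
  exists ((lo + hi) / 2)%R; split; [lra|by []].
have [z [Hz Hs]] := IH lo hi Hlh.
case: (Req_dec (f a) z) => Ha.
- have [z2 [Hz2 Hs2]] := IH lo z ltac:(lra).
  exists z2; split; first lra.
  move=> v; rewrite in_cons => /orP [/eqP ->|/Hs2 //]; lra.
- exists z; split => // v; rewrite in_cons => /orP [/eqP -> //|/Hs //].
Qed.

Lemma seq_lower (V : eqType) (f : V -> R) (P : pred V) (s : seq V) lo :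
  (forall v, v \in s -> P v -> (lo < f v)%R) ->
  exists hi, (lo < hi)%R /\ forall v, v \in s -> P v -> (hi <= f v)%R.
Proof.
elim: s => [|a s IH] H.
  by exists (lo + 1)%R; split; [lra|].
have [|hi [H1 H2]] := IH.
  by move=> v Hv; apply: H; rewrite in_cons Hv orbT.
case Pa: (P a).
- have Ha := H a (mem_head _ _) Pa.
  exists (Rmin hi (f a)); split; first by apply: Rmin_glb_lt.
  move=> v; rewrite in_cons => /orP [/eqP ->|Hv Pv]; first by move=> _; apply: Rmin_r.
  have := Rmin_l hi (f a); have := H2 v Hv Pv; lra.
- exists hi; split => // v; rewrite in_cons => /orP [/eqP -> |Hv Pv]; first by rewrite Pa.
  exact: H2.
Qed.

Lemma set_upper (V : finType) (f : V -> R) (A : {set V}) :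
  exists M, forall v, v \in A -> (f v < M)%R.
Proof.
have [M HM] := seq_upper f (enum A); exists M => v Hv; apply: HM; by rewrite mem_enum.
Qed.

Lemma set_fresh (V : finType) (f : V -> R) (A : {set V}) lo hi : (lo < hi)%R ->
  exists z, (lo < z < hi)%R /\ forall v, v \in A -> f v <> z.
Proof.
move=> H; have [z [H1 H2]] := seq_fresh f (enum A) H; exists z; split => // v Hv.
by apply: H2; rewrite mem_enum.
Qed.

Lemma set_lower (V : finType) (f : V -> R) (P : pred V) (A : {set V}) lo :
  (forall v, v \in A -> P v -> (lo < f v)%R) ->
  exists hi, (lo < hi)%R /\ forall v, v \in A -> P v -> (hi <= f v)%R.
Proof.
move=> H; have [|hi [H1 H2]] := @seq_lower _ f P (enum A) lo.
  by move=> v; rewrite mem_enum; apply: H.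
by exists hi; split => // v; rewrite -mem_enum; apply: H2.
Qed.

Lemma arc_outdeg (V : finType) (N : net V) u v : narc N u v -> 0 < outdeg N u.
Proof. by move=> H; apply/card_gt0P; exists v; rewrite inE. Qed.

Lemma arc_indeg (V : finType) (N : net V) u v : narc N u v -> 0 < indeg N v.
Proof. by move=> H; apply/card_gt0P; exists u; rewrite inE. Qed.

Lemma leaf_nochild (V : finType) (N : net V) x b : is_leaf N x -> narc N x b = false.
Proof.
move=> /and3P [_ _ /eqP H]; apply/negP => Hb; have := arc_outdeg Hb; by rewrite H.
Qed.

Lemma acyc (V : finType) (N : net V) a b : is_network N ->
  connect (narc N) a b -> connect (narc N) b a -> a = b.
Proof.
move=> [_ [Hac _]] /connectP [[|c p] Hp ->] //= Hba.
move/andP: Hp => [Hac' Hp].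
have Hcb : connect (narc N) c (last c p) by apply/connectP; exists p.
have := Hac _ _ Hac'; by rewrite (connect_trans Hcb Hba).
Qed.

Lemma noloop (V : finType) (N : net V) a b : is_network N -> narc N a b -> a != b.
Proof.
move=> [_ [Hac _]] Hab; apply/eqP => E; subst b; have := Hac _ _ Hab; by rewrite connect0.
Qed.

Lemma base_label (V : finType) (N : net V) : is_tree N -> exists t, Label N t.
Proof.
move=> [HN Hnr].
pose n := #|V|.
pose anc v := #|[set u | connect (narc N) u v]|.
pose lb v := if is_leaf N v then 1 else 0.
pose key v := (lb v * n.+1 + anc v) * n + enum_rank v.
have rk v : (enum_rank v < n)%N := ltn_ord (enum_rank v).
have ancn v : (anc v <= n)%N by apply: max_card.
have ancarc u v : narc N u v -> (anc u < anc v)%N.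
  move=> Huv; apply: proper_card; rewrite properE; apply/andP; split.
    apply/subsetP => w; rewrite !inE => Hw.
    exact: (connect_trans Hw (connect1 Huv)).
  apply/subsetPn; exists v; rewrite !inE ?connect0 //.
  by have [_ [Hac _]] := HN; apply: Hac.
have nleaf u v : narc N u v -> lb u = 0.
  move=> Huv; rewrite /lb; case: ifP => // /and3P [_ _ /eqP H].
  by have := arc_outdeg Huv; rewrite H.
have keyarc u v : narc N u v -> (key u < key v)%N.
  move=> Huv; rewrite /key (nleaf _ _ Huv).
  have := ancarc _ _ Huv; have := rk u; have := rk v; nia.
exists (fun v => INR (key v)); split; [split; [|split]|split].
- move=> u v Huv; have H := keyarc _ _ Huv; move/ltP: H => /lt_INR H.
  split; first lra. move=> E; lra.
- move=> u Hu Hl.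
  have [_ [_ [Hty _]]] := HN.
  have : 0 < outdeg N u.
    move: (Hty u Hu) (Hnr u); rewrite /is_root /is_tree_node /is_ret Hu /=.
    case/orP => [/andP [_ /eqP ->] //|]. case/orP => [/andP [_ H] _|].
      by apply: leq_trans H.
    by case/orP => [->//|H]; rewrite H in Hl.
  move/card_gt0P => [v]; rewrite inE => Huv; exists v; split => //.
  by apply: lt_INR; apply/ltP; apply: keyarc.
- by move=> r u v Hr; have := Hnr r; rewrite Hr.
- move=> a b _ _ Hab /INR_eq E; exfalso; apply: Hab.
  have : key a %% n = key b %% n by rewrite E.
  rewrite /key !modnMDl !modn_small ?rk //.
  by move=> /val_inj /enum_rank_inj.
- move=> a b _ _ Ha Hb; apply: lt_INR; apply/ltP.
  have la : lb a = 1 by rewrite /lb Ha.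
  have lbb : lb b = 0 by rewrite /lb (negbTE Hb).
  rewrite /key la lbb; have := rk a; have := rk b; have := ancn b; nia.
Qed.

Lemma types_eq (V : finType) (N N' : net V) v :
  v \in nodes N' -> v \in nodes N -> indeg N' v = indeg N v -> outdeg N' v = outdeg N v ->
  [/\ is_root N' v = is_root N v, is_tree_node N' v = is_tree_node N v,
      is_ret N' v = is_ret N v & is_leaf N' v = is_leaf N v].
Proof.
by move=> H1 H2 H3 H4; rewrite /is_root /is_tree_node /is_ret /is_leaf H1 H2 H3 H4.
Qed.

Lemma good_transfer (V : finType) (N N' : net V) :
 good N ->
 {subset nodes N' <= nodes N} ->
 (forall a b, narc N' a b -> connect (narc N) a b) ->
 (forall a b, narc N' a b -> a != b) ->
 (forall a b, narc N' a b -> a \in nodes N' /\ b \in nodes N') ->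
 (forall v, v \in nodes N' -> indeg N' v = indeg N v /\ outdeg N' v = outdeg N v) ->
 (forall r, is_root N r -> r \in nodes N') ->
 good N'.
Proof.
move=> [HN Hb] Hsub Hcon Hneq Hin Hdeg Hroot.
have Hty v : v \in nodes N' -> _ := fun H => let: conj H1 H2 := Hdeg v H in
   types_eq H (Hsub _ H) H1 H2.
have [HNin [Hac [Htyp [r [Hr Hru]]]]] := HN.
split; [split; [exact: Hin|split; [|split]]|].
- move=> u v Huv; apply/negP => Hvu.
  have := Hneq _ _ Huv; rewrite (acyc HN (Hcon _ _ Huv) (connect_sub Hcon Hvu)).
  by rewrite eqxx.
- move=> v Hv; have [-> -> -> ->] := Hty v Hv; exact: Htyp (Hsub _ Hv).
- have Hr' := Hroot r Hr; exists r; split.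
    by have [-> _ _ _] := Hty r Hr'.
  move=> r' Hr'2.
  have Hn : r' \in nodes N' by case/and3P: Hr'2.
  by apply: Hru; have [<- _ _ _] := Hty r' Hn.
- move=> v; case Hv: (v \in nodes N').
  + have [H1 H2] := Hdeg v Hv; have [_ -> -> _] := Hty v Hv.
    by rewrite H1 H2; apply: Hb.
  + by rewrite /is_tree_node /is_ret Hv.
Qed.

Lemma suppress_eq (V : finType) (N : net V) v u w :
  v \in nodes N -> (forall a, narc N a v = (a == u)) -> (forall b, narc N v b = (b == w)) ->
  suppress N v = Net (nodes N :\ v)
     (fun a b => (narc N a b && (a != v) && (b != v)) || ((a == u) && (b == w))).
Proof.
move=> Hv Hu Hw; rewrite /suppress.
case: pickP => [u' Hu'|H]; last by have := H u; rewrite Hu eqxx.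
case: pickP => [w' Hw'|H]; last by have := H w; rewrite Hw eqxx.
rewrite Hu in Hu'; rewrite Hw in Hw'; move/eqP: Hu' => ->; move/eqP: Hw' => ->.
have -> : indeg N v = 1.
  rewrite /indeg (_ : [set a | narc N a v] = [set u]) ?cards1 //.
  by apply/setP => a; rewrite !inE Hu.
have -> : outdeg N v = 1.
  rewrite /outdeg (_ : [set a | narc N v a] = [set w]) ?cards1 //.
  by apply/setP => a; rewrite !inE Hw.
by rewrite Hv.
Qed.

Definition swap (V : eqType) (a b z : V) := if z == a then b else if z == b then a else z.

Lemma swapK (V : eqType) (a b : V) : involutive (swap a b).
Proof.
move=> z; rewrite /swap.
case: (eqVneq z a) => [->|Hza]; first by rewrite eqxx; case: (eqVneq b a) => [->|_]; rewrite ?eqxx.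
case: (eqVneq z b) => [->|Hzb]; first by rewrite eqxx.
by rewrite (negbTE Hza) (negbTE Hzb).
Qed.

Lemma card_swap (V : finType) (f : V -> V) (P Q : pred V) : injective f ->
  (forall z, Q z = P (f z)) -> #|[set z | Q z]| = #|[set z | P z]|.
Proof.
move=> Hf HQ; transitivity #|f @^-1: [set z | P z]|; last exact: card_preimset.
by apply: eq_card => z; rewrite !inE HQ.
Qed.

Lemma swap_l (V : eqType) (a b : V) : swap a b a = b.
Proof. by rewrite /swap eqxx. Qed.
Lemma swap_r (V : eqType) (a b : V) : swap a b b = a.
Proof. by rewrite /swap eqxx; case: eqVneq => [->|]. Qed.
Lemma swap_o (V : eqType) (a b z : V) : z != a -> z != b -> swap a b z = z.
Proof. by move=> H1 H2; rewrite /swap (negbTE H1) (negbTE H2). Qed.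
Lemma swap_inj (V : eqType) (a b : V) : injective (swap a b).
Proof. exact: can_inj (swapK a b). Qed.

Lemma tree_not_leaf (V : finType) (N : net V) v : is_tree_node N v -> ~~ is_leaf N v.
Proof. by case/and3P => _ _ H; apply/negP => /and3P [_ _ /eqP E]; rewrite E in H. Qed.
Lemma tree_not_ret (V : finType) (N : net V) v : is_tree_node N v -> ~~ is_ret N v.
Proof. by case/and3P => _ /eqP H _; apply/negP => /and3P [_ E _]; rewrite H in E. Qed.
Lemma ret_not_leaf (V : finType) (N : net V) v : is_ret N v -> ~~ is_leaf N v.
Proof. by case/and3P => _ _ /eqP H; apply/negP => /and3P [_ _ /eqP E]; rewrite E in H. Qed.

Lemma cherry_good (V : finType) (N N' : net V) x y p g :
  good N -> is_leaf N x -> is_leaf N y -> x != y ->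
  (forall a, narc N a x = (a == p)) ->
  (forall a, narc N a y = (a == p)) ->
  (forall b, narc N p b = (b == x) || (b == y)) ->
  (forall a, narc N a p = (a == g)) ->
  is_tree_node N p ->
  nodes N' = nodes N :\ x :\ p ->
  (forall a b, narc N' a b = (narc N a b && (a != p) && (b != p)) || ((a == g) && (b == y))) ->
  good N' /\ (forall v, v \in nodes N' -> indeg N' v = indeg N v /\ outdeg N' v = outdeg N v).
Proof.
move=> HG Hx Hy Hxy Hax Hay Hpb Hap Hp HnN' HaN'.
have HN := HG.1.
have Hxb b := leaf_nochild b Hx.
have Hyb b := leaf_nochild b Hy.
have Hgp : narc N g p by rewrite Hap.
have Hpx : narc N p x by rewrite Hpb eqxx.
have Hpy : narc N p y by rewrite Hpb eqxx orbT.
have pNx : p != x := noloop HN Hpx.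
have pNy : p != y := noloop HN Hpy.
have gNp : g != p := noloop HN Hgp.
have gNx : g != x by apply/eqP => E; have := Hxb p; rewrite -E Hgp.
have gNy : g != y by apply/eqP => E; have := Hyb p; rewrite -E Hgp.
have Hin a b : narc N a b -> a \in nodes N /\ b \in nodes N by apply: HN.1.
have inN' v : (v \in nodes N') = [&& v != p, v != x & v \in nodes N].
  by rewrite HnN' !in_setD1.
have yN' : y \in nodes N' by rewrite inN' eq_sym pNy eq_sym Hxy (Hin _ _ Hpy).2.
have gN' : g \in nodes N' by rewrite inN' gNp gNx (Hin _ _ Hgp).1.
have Hdeg : forall v, v \in nodes N' -> indeg N' v = indeg N v /\ outdeg N' v = outdeg N v.
  move=> v; rewrite inN' => /and3P [vNp vNx vN]; split.
  + case: (eqVneq v y) => [->|vNy].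
    * apply: (card_swap (f := swap g p)); first exact: swap_inj.
      move=> z; rewrite HaN' ?Hay ?eqxx ?andbT ?Hay.
      case: (eqVneq z p) => [->|zNp] /=; first by rewrite swap_r eq_sym.
      case: (eqVneq z g) => [->|zNg] /=; first by rewrite swap_l !eqxx.
      by rewrite swap_o // (negbTE zNp).
    * apply: eq_card => z; rewrite !inE HaN' (negbTE vNy) andbF orbF vNp andbT.
      case: (eqVneq z p) => [->|]; last by rewrite andbT.
      by rewrite Hpb (negbTE vNx) (negbTE vNy).
  + apply: (card_swap (f := swap p y)); first exact: swap_inj.
    move=> b; rewrite HaN' vNp andbT.
    case: (eqVneq b p) => [->|bNp] /=; first by rewrite swap_l Hay (negbTE vNp) (negbTE pNy) !andbF.
    case: (eqVneq b y) => [->|bNy] /=; first by rewrite swap_r Hay (negbTE vNp) Hap ?eqxx ?andbT.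
    by rewrite swap_o // andbT andbF orbF.
split => //.
apply: (good_transfer HG).
- by move=> v; rewrite inN' => /and3P [].
- move=> a b; rewrite HaN' => /orP [/andP [/andP [H _] _]|/andP [/eqP -> /eqP ->]].
    exact: connect1.
  exact: connect_trans (connect1 Hgp) (connect1 Hpy).
- move=> a b; rewrite HaN' => /orP [/andP [/andP [H _] _]|/andP [/eqP -> /eqP ->] //].
  exact: noloop HN H.
- move=> a b; rewrite HaN' => /orP [/andP [/andP [H Ha] Hb]|/andP [/eqP -> /eqP ->] //].
  have [Ha' Hb'] := Hin _ _ H.
  rewrite !inN' Ha Hb Ha' Hb' !andbT /=; split.
    by apply/eqP => E; rewrite E Hxb in H.
  by apply/eqP => E; rewrite E Hax in H; rewrite H in Ha.
- exact: Hdeg.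
- move=> r /and3P [rN /eqP r0 _].
  have nr z : narc N z r = false.
    by apply/negP => /arc_indeg; rewrite r0.
  rewrite inN' rN andbT; apply/andP; split; apply/eqP => E; subst r.
    by rewrite nr in Hgp.
  by rewrite nr in Hpx.
Qed.

Lemma cherry_label (V : finType) (N N' : net V) x y p g :
  good N -> is_leaf N x -> is_leaf N y -> x != y ->
  (forall a, narc N a x = (a == p)) ->
  (forall a, narc N a y = (a == p)) ->
  (forall b, narc N p b = (b == x) || (b == y)) ->
  (forall a, narc N a p = (a == g)) ->
  is_tree_node N p ->
  nodes N' = nodes N :\ x :\ p ->
  (forall a b, narc N' a b = (narc N a b && (a != p) && (b != p)) || ((a == g) && (b == y))) ->
  forall t', Label N' t' -> exists t, Label N t.
Proof.
move=> HG Hx Hy Hxy Hax Hay Hpb Hap Hp HnN' HaN'.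
have [HG' Hdeg] := cherry_good HG Hx Hy Hxy Hax Hay Hpb Hap Hp HnN' HaN'.
have HN := HG.1.
have Hxb b := leaf_nochild b Hx.
have Hyb b := leaf_nochild b Hy.
have Hgp : narc N g p by rewrite Hap.
have Hpx : narc N p x by rewrite Hpb eqxx.
have Hpy : narc N p y by rewrite Hpb eqxx orbT.
have pNx : p != x := noloop HN Hpx.
have pNy : p != y := noloop HN Hpy.
have gNp : g != p := noloop HN Hgp.
have gNx : g != x by apply/eqP => E; have := Hxb p; rewrite -E Hgp.
have gNy : g != y by apply/eqP => E; have := Hyb p; rewrite -E Hgp.
have Hin a b : narc N a b -> a \in nodes N /\ b \in nodes N by apply: HN.1.
have inN' v : (v \in nodes N') = [&& v != p, v != x & v \in nodes N].
  by rewrite HnN' !in_setD1.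
have yN' : y \in nodes N' by rewrite inN' eq_sym pNy eq_sym Hxy (Hin _ _ Hpy).2.
have gN' : g \in nodes N' by rewrite inN' gNp gNx (Hin _ _ Hgp).1.
have xN : x \in nodes N by case/and3P: Hx.
have pN : p \in nodes N by case/and3P: Hp.
have Hty v : v \in nodes N' ->
  [/\ is_root N' v = is_root N v, is_tree_node N' v = is_tree_node N v,
      is_ret N' v = is_ret N v & is_leaf N' v = is_leaf N v].
  move=> Hv; have Hv2 : v \in nodes N by move: Hv; rewrite inN' => /and3P [].
  by have [D1 D2] := Hdeg v Hv; apply: types_eq.
move=> t' [[H1 [H2 H3]] [Hex Hlf]].
have Hgy' : narc N' g y by rewrite HaN' !eqxx orbT.
have yleaf' : is_leaf N' y by have [_ _ _ ->] := Hty y yN'.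
have gnl' : ~~ is_leaf N' g by apply/negP => /(leaf_nochild y); rewrite Hgy'.
have [hi [Hhi1 Hhi2]] := @set_lower _ t' (fun v => is_leaf N' v) (nodes N') (t' g)
   (fun v Hv Hl => Hlf v g Hv gN' Hl gnl').
have [s [Hs1 Hs2]] := set_fresh t' (nodes N') Hhi1.
have [M0 HM0] := set_upper t' (nodes N').
pose M := Rmax M0 (s + 1).
have HM1 : (M0 <= M)%R by apply: Rmax_l.
have HM2 : (s + 1 <= M)%R by apply: Rmax_r.
have Hty' := Hhi2 y yN' yleaf'.
pose t v := if v == p then s else if v == x then M else t' v.
have tp : t p = s by rewrite /t eqxx.
have tx : t x = M by rewrite /t eqxx eq_sym (negbTE pNx).
have tE v : v \in nodes N' -> t v = t' v.
  by rewrite inN' => /and3P [H1' H2' _]; rewrite /t (negbTE H1') (negbTE H2').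
have inN'2 v : v \in nodes N -> v != p -> v != x -> v \in nodes N'.
  by move=> H1' H2' H3'; rewrite inN' H1' H2' H3'.
exists t; split; [split; [|split]|split].
- move=> a b Hab.
  case: (eqVneq a p) => [Ea|aNp].
    subst a; move: Hab; rewrite Hpb => /orP [/eqP Eb|/eqP Eb]; subst b.
    + rewrite tp tx; split; [lra| move=> E; lra].
    + rewrite tp (tE y yN'); split; [lra| move=> E; lra].
  case: (eqVneq b p) => [Eb|bNp].
    subst b; have /eqP Ea : a == g by rewrite -Hap.
    subst a; rewrite tp (tE g gN'); split; [lra|move=> E; lra].
  have [aN bN] := Hin _ _ Hab.
  have aNx : a != x by apply/eqP => E; rewrite E Hxb in Hab.
  have bNx : b != x by apply/eqP => E; rewrite E Hax in Hab; rewrite Hab in aNp.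
  have aN' := inN'2 a aN aNp aNx.
  have bN' := inN'2 b bN bNp bNx.
  have Hab' : narc N' a b by rewrite HaN' Hab aNp bNp.
  rewrite (tE a aN') (tE b bN'); have [_ _ <- _] := Hty b bN'.
  exact: H1 _ _ Hab'.
- move=> u uN Hul.
  case: (eqVneq u p) => [->|uNp].
    by exists x; split => //; rewrite tp tx; lra.
  case: (eqVneq u x) => [Eu|uNx]; first by rewrite Eu Hx in Hul.
  have uN' := inN'2 u uN uNp uNx.
  have Hul' : ~~ is_leaf N' u by have [_ _ _ ->] := Hty u uN'.
  have [v [Huv Htv]] := H2 u uN' Hul'.
  rewrite (tE u uN').
  have Huv2 := Huv.
  move: Huv; rewrite HaN' => /orP [/andP [/andP [Huv _] vNp]| /andP [/eqP Eu /eqP Ev]].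
  + have vN' : v \in nodes N' := ((HG'.1).1 _ _ Huv2).2.
    by exists v; split => //; rewrite (tE v vN').
  + subst u; exists p; split => //; rewrite tp; lra.
- move=> r u v Hr Hur Hvr Huv.
  have rNp : r != p.
    by apply/eqP => E; subst r; apply: Huv; move: Hur Hvr; rewrite !Hap => /eqP -> /eqP ->.
  have rNx : r != x.
    by apply/eqP => E; subst r; apply: Huv; move: Hur Hvr; rewrite !Hax => /eqP -> /eqP ->.
  have rNy : r != y.
    by apply/eqP => E; subst r; apply: Huv; move: Hur Hvr; rewrite !Hay => /eqP -> /eqP ->.
  have aux w : narc N w r -> [/\ w \in nodes N', narc N' w r & t w = t' w].
    move=> Hwr.
    have wNp : w != p by apply/eqP => E; move: Hwr; rewrite E Hpb (negbTE rNx) (negbTE rNy).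
    have wNx : w != x by apply/eqP => E; rewrite E Hxb in Hwr.
    have wN' := inN'2 w (Hin _ _ Hwr).1 wNp wNx.
    split => //; [by rewrite HaN' Hwr wNp rNp|exact: tE].
  have rN' := inN'2 r (Hin _ _ Hur).2 rNp rNx.
  have [uN' Hur' ->] := aux u Hur.
  have [vN' Hvr' ->] := aux v Hvr.
  rewrite (tE r rN').
  apply: (H3 r u v) => //.
  by have [_ _ -> _] := Hty r rN'.
- have spec a b : a \in nodes N -> b \in nodes N -> a <> b -> (a == p) || (a == x) -> t a <> t b.
    move=> aN bN Hab /orP [/eqP Ea|/eqP Ea]; subst a.
    + rewrite tp; case: (eqVneq b x) => [->|bNx]; first by rewrite tx; lra.
      have bNp : b != p by apply/eqP => E; apply: Hab.
      have bN' := inN'2 b bN bNp bNx.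
      by rewrite (tE b bN'); move=> E; apply: (Hs2 b bN'); rewrite E.
    + rewrite tx; case: (eqVneq b p) => [->|bNp]; first by rewrite tp; lra.
      have bNx : b != x by apply/eqP => E; apply: Hab.
      have bN' := inN'2 b bN bNp bNx.
      by rewrite (tE b bN'); have := HM0 b bN'; lra.
  move=> a b aN bN Hab Htab.
  case: (boolP ((a == p) || (a == x))) => Ha.
    by exfalso; exact: (spec a b aN bN Hab Ha Htab).
  case: (boolP ((b == p) || (b == x))) => Hb.
    by exfalso; apply: (spec b a bN aN (nesym Hab) Hb); rewrite Htab.
  rewrite negb_or in Ha; rewrite negb_or in Hb.
  move/andP: Ha => [aNp aNx]; move/andP: Hb => [bNp bNx].
  have aN' := inN'2 a aN aNp aNx.
  have bN' := inN'2 b bN bNp bNx.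
  rewrite (tE a aN') (tE b bN') in Htab.
  have Hconv u w : narc N' u w -> is_ret N' w -> narc N u w.
    rewrite HaN' => /orP [/andP [/andP [H _] _] //| /andP [_ /eqP Ew]] Hr; subst w.
    by have := ret_not_leaf Hr; rewrite yleaf'.
  have [_ Ta Ra _] := Hty a aN'; have [_ Tb Rb _] := Hty b bN'.
  case: (Hex a b aN' bN' Hab Htab) => [[Hab' [Ht Hr]]|[Hba' [Ht Hr]]]; [left|right].
  + by rewrite -Ta -Rb; split => //; apply: Hconv.
  + by rewrite -Tb -Ra; split => //; apply: Hconv.
- move=> a b aN bN Hla Hlb.
  have aNp : a != p by apply/eqP => E; subst a; have := tree_not_leaf Hp; rewrite Hla.
  case: (eqVneq a x) => [Ea|aNx].
    subst a; rewrite tx.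
    case: (eqVneq b p) => [->|bNp]; first by rewrite tp; lra.
    case: (eqVneq b x) => [Eb|bNx]; first by rewrite Eb Hx in Hlb.
    have bN' := inN'2 b bN bNp bNx.
    by rewrite (tE b bN'); have := HM0 b bN'; lra.
  have aN' := inN'2 a aN aNp aNx.
  have Hla' : is_leaf N' a by have [_ _ _ ->] := Hty a aN'.
  rewrite (tE a aN').
  case: (eqVneq b p) => [->|bNp]; first by rewrite tp; have := Hhi2 a aN' Hla'; lra.
  case: (eqVneq b x) => [Eb|bNx]; first by rewrite Eb Hx in Hlb.
  have bN' := inN'2 b bN bNp bNx.
  rewrite (tE b bN'); apply: Hlf => //.
  by have [_ _ _ ->] := Hty b bN'.
Qed.

Ltac neqs := repeat match goal with
 | H : is_true (?a != ?b) |- context [?a == ?b] => rewrite (negbTE H)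
 | H : is_true (?a != ?b) |- context [?b == ?a] => rewrite [b == a]eq_sym (negbTE H)
 end.
Ltac bs := neqs; rewrite ?eqxx ?andbT ?andbF ?orbT ?orbF ?andTb ?andFb ?orTb ?orFb /=; neqs;
  rewrite ?eqxx ?andbT ?andbF ?orbT ?orbF ?andTb ?andFb ?orTb ?orFb /=.

Lemma ret_good (V : finType) (N N' : net V) x y px py g q :
  good N -> is_leaf N x -> is_leaf N y -> x != y -> px != py -> q != py ->
  (forall a, narc N a x = (a == px)) ->
  (forall a, narc N a y = (a == py)) ->
  (forall b, narc N px b = (b == x)) ->
  (forall b, narc N py b = (b == px) || (b == y)) ->
  (forall a, narc N a px = (a == py) || (a == q)) ->
  (forall a, narc N a py = (a == g)) ->
  nodes N' = nodes N :\ py :\ px ->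
  (forall a b, narc N' a b = (narc N a b && (a != py) && (b != py) && (a != px) && (b != px))
                 || ((a == g) && (b == y)) || ((a == q) && (b == x))) ->
  good N' /\ (forall v, v \in nodes N' -> indeg N' v = indeg N v /\ outdeg N' v = outdeg N v).
Proof.
move=> HG Hx Hy Hxy pxNpy qNpy Hax Hay Hpxb Hpyb Hapx Hapy HnN' HaN'.
have HN := HG.1.
have Hxb b := leaf_nochild b Hx.
have Hyb b := leaf_nochild b Hy.
have Hgpy : narc N g py by rewrite Hapy.
have Hpypx : narc N py px by rewrite Hpyb eqxx.
have Hpyy : narc N py y by rewrite Hpyb eqxx orbT.
have Hqpx : narc N q px by rewrite Hapx eqxx orbT.
have Hpxx : narc N px x by rewrite Hpxb.
have pxNx : px != x := noloop HN Hpxx.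
have pyNy : py != y := noloop HN Hpyy.
have gNpy : g != py := noloop HN Hgpy.
have qNpx : q != px := noloop HN Hqpx.
have gNpx : g != px.
  apply/eqP => E; have Hg' := Hgpy; rewrite E in Hg'.
  have := acyc HN (connect1 Hpypx) (connect1 Hg').
  by move=> E2; rewrite E2 eqxx in pxNpy.
have gNx : g != x by apply/eqP => E; have := Hxb py; rewrite -E Hgpy.
have gNy : g != y by apply/eqP => E; have := Hyb py; rewrite -E Hgpy.
have qNx : q != x by apply/eqP => E; have := Hxb px; rewrite -E Hqpx.
have qNy : q != y by apply/eqP => E; have := Hyb px; rewrite -E Hqpx.
have pxNy : px != y by apply/eqP => E; have := Hyb x; rewrite -E Hpxx.
have pyNx : py != x by apply/eqP => E; have := Hxb px; rewrite -E Hpypx.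
have Hin a b : narc N a b -> a \in nodes N /\ b \in nodes N by apply: HN.1.
have inN' v : (v \in nodes N') = [&& v != px, v != py & v \in nodes N].
  by rewrite HnN' !in_setD1.
have yN' : y \in nodes N' by rewrite inN' eq_sym pxNy eq_sym pyNy (Hin _ _ Hpyy).2.
have xN' : x \in nodes N' by rewrite inN' eq_sym pxNx eq_sym pyNx (Hin _ _ Hpxx).2.
have gN' : g \in nodes N' by rewrite inN' gNpx gNpy (Hin _ _ Hgpy).1.
have qN' : q \in nodes N' by rewrite inN' qNpx qNpy (Hin _ _ Hqpx).1.
have Hdeg : forall v, v \in nodes N' -> indeg N' v = indeg N v /\ outdeg N' v = outdeg N v.
  move=> v; rewrite inN' => /and3P [vNpx vNpy vN]; split.
  + case: (eqVneq v y) => [->|vNy].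
      apply: (card_swap (f := swap g py)); first exact: swap_inj.
      move=> z; rewrite HaN' ?Hay.
      case: (eqVneq z py) => [->|zNpy]; first by rewrite swap_r ?Hay; bs.
      case: (eqVneq z g) => [->|zNg]; first by rewrite swap_l ?Hay; bs.
      by rewrite swap_o // ?Hay; bs.
    case: (eqVneq v x) => [->|vNx].
      apply: (card_swap (f := swap q px)); first exact: swap_inj.
      move=> z; rewrite HaN' ?Hax.
      case: (eqVneq z px) => [->|zNpx]; first by rewrite swap_r ?Hax; bs.
      case: (eqVneq z q) => [->|zNq]; first by rewrite swap_l ?Hax; bs.
      by rewrite swap_o // ?Hax; bs.
    apply: eq_card => z; rewrite !inE HaN'.
    case: (eqVneq z py) => [->|zNpy]; first by rewrite ?Hpyb; bs.
    case: (eqVneq z px) => [->|zNpx]; first by rewrite ?Hpxb; bs.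
    by bs.
  + apply: (card_swap (f := swap px x \o swap py y)).
      by apply: inj_comp; exact: swap_inj.
    move=> b /=; rewrite HaN'.
    have yNpx : y != px by rewrite eq_sym.
    have yNx : y != x by rewrite eq_sym.
    have pyNpx : py != px by rewrite eq_sym.
    have xNpy : x != py by rewrite eq_sym.
    case: (eqVneq b py) => [->|bNpy].
      by rewrite swap_l (swap_o yNpx yNx) ?Hay; bs.
    case: (eqVneq b y) => [->|bNy].
      by rewrite swap_r (swap_o pyNpx pyNx) ?Hapy ?Hay; bs.
    case: (eqVneq b px) => [->|bNpx].
      by rewrite (swap_o pxNpy pxNy) swap_l ?Hax; bs.
    case: (eqVneq b x) => [->|bNx].
      by rewrite (swap_o xNpy Hxy) swap_r ?Hax ?Hapx; bs.
    by rewrite (swap_o bNpy bNy) (swap_o bNpx bNx); bs.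
split => //.
apply: (good_transfer HG).
- by move=> v; rewrite inN' => /and3P [].
- move=> a b; rewrite HaN' => /orP [/orP [H|/andP [/eqP -> /eqP ->]]|/andP [/eqP -> /eqP ->]].
  + by move/andP: H => [/andP [/andP [/andP [H _] _] _] _]; exact: connect1.
  + exact: connect_trans (connect1 Hgpy) (connect1 Hpyy).
  + exact: connect_trans (connect1 Hqpx) (connect1 Hpxx).
- move=> a b; rewrite HaN' => /orP [/orP [H|/andP [/eqP -> /eqP ->] //]|/andP [/eqP -> /eqP ->] //].
  by move/andP: H => [/andP [/andP [/andP [H _] _] _] _]; exact: noloop HN H.
- move=> a b; rewrite HaN' => /orP [/orP [H|/andP [/eqP -> /eqP ->] //]|/andP [/eqP -> /eqP ->] //].
  move/andP: H => [/andP [/andP [/andP [H Ha1] Hb1] Ha2] Hb2].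
  have [Ha' Hb'] := Hin _ _ H.
  by rewrite !inN' Ha1 Hb1 Ha2 Hb2 Ha' Hb'.
- exact: Hdeg.
- move=> r /and3P [rN /eqP r0 _].
  have nr z : narc N z r = false.
    by apply/negP => /arc_indeg; rewrite r0.
  rewrite inN' rN andbT; apply/andP; split; apply/eqP => E; subst r.
    by rewrite nr in Hpypx.
  by rewrite nr in Hgpy.
Qed.

Lemma ret_label (V : finType) (N N' : net V) x y px py g q :
  good N -> is_leaf N x -> is_leaf N y -> x != y -> px != py -> q != py ->
  (forall a, narc N a x = (a == px)) ->
  (forall a, narc N a y = (a == py)) ->
  (forall b, narc N px b = (b == x)) ->
  (forall b, narc N py b = (b == px) || (b == y)) ->
  (forall a, narc N a px = (a == py) || (a == q)) ->
  (forall a, narc N a py = (a == g)) ->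
  is_ret N px -> is_tree_node N py ->
  nodes N' = nodes N :\ py :\ px ->
  (forall a b, narc N' a b = (narc N a b && (a != py) && (b != py) && (a != px) && (b != px))
                 || ((a == g) && (b == y)) || ((a == q) && (b == x))) ->
  forall t', Label N' t' -> exists t, Label N t.
Proof.
move=> HG Hx Hy Hxy pxNpy qNpy Hax Hay Hpxb Hpyb Hapx Hapy Hpx Hpy HnN' HaN'.
have [HG' Hdeg] := ret_good HG Hx Hy Hxy pxNpy qNpy Hax Hay Hpxb Hpyb Hapx Hapy HnN' HaN'.
have HN := HG.1.
have Hxb b := leaf_nochild b Hx.
have Hyb b := leaf_nochild b Hy.
have Hgpy : narc N g py by rewrite Hapy.
have Hpypx : narc N py px by rewrite Hpyb eqxx.
have Hpyy : narc N py y by rewrite Hpyb eqxx orbT.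
have Hqpx : narc N q px by rewrite Hapx eqxx orbT.
have Hpxx : narc N px x by rewrite Hpxb.
have pxNx : px != x := noloop HN Hpxx.
have pyNy : py != y := noloop HN Hpyy.
have gNpy : g != py := noloop HN Hgpy.
have qNpx : q != px := noloop HN Hqpx.
have gNpx : g != px.
  apply/eqP => E; have Hg' := Hgpy; rewrite E in Hg'.
  have := acyc HN (connect1 Hpypx) (connect1 Hg').
  by move=> E2; rewrite E2 eqxx in pxNpy.
have pxNy : px != y by apply/eqP => E; have := Hyb x; rewrite -E Hpxx.
have pyNx : py != x by apply/eqP => E; have := Hxb px; rewrite -E Hpypx.
have Hin a b : narc N a b -> a \in nodes N /\ b \in nodes N by apply: HN.1.
have inN' v : (v \in nodes N') = [&& v != px, v != py & v \in nodes N].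
  by rewrite HnN' !in_setD1.
have inN'2 v : v \in nodes N -> v != px -> v != py -> v \in nodes N'.
  by move=> H1' H2' H3'; rewrite inN' H1' H2' H3'.
have yN' : y \in nodes N' by rewrite inN'2 // ?(Hin _ _ Hpyy).2 // eq_sym.
have xN' : x \in nodes N' by rewrite inN'2 // ?(Hin _ _ Hpxx).2 // eq_sym.
have gN' : g \in nodes N' by rewrite inN'2 // (Hin _ _ Hgpy).1.
have qN' : q \in nodes N' by rewrite inN'2 // (Hin _ _ Hqpx).1.
have Hty v : v \in nodes N' ->
  [/\ is_root N' v = is_root N v, is_tree_node N' v = is_tree_node N v,
      is_ret N' v = is_ret N v & is_leaf N' v = is_leaf N v].
  move=> Hv; have Hv2 : v \in nodes N by move: Hv; rewrite inN' => /and3P [].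
  by have [D1 D2] := Hdeg v Hv; apply: types_eq.
move=> t' [[H1 [H2 H3]] [Hex Hlf]].
have Hgy' : narc N' g y by rewrite HaN' !eqxx /= orbT.
have Hqx' : narc N' q x by rewrite HaN' !eqxx /= orbT.
have yleaf' : is_leaf N' y by have [_ _ _ ->] := Hty y yN'.
have xleaf' : is_leaf N' x by have [_ _ _ ->] := Hty x xN'.
have gnl' : ~~ is_leaf N' g by apply/negP => /(leaf_nochild y); rewrite Hgy'.
have qnl' : ~~ is_leaf N' q by apply/negP => /(leaf_nochild x); rewrite Hqx'.
pose lo := Rmax (t' g) (t' q).
have Hlo1 : (t' g <= lo)%R by apply: Rmax_l.
have Hlo2 : (t' q <= lo)%R by apply: Rmax_r.
have [hi [Hhi1 Hhi2]] := @set_lower _ t' (fun v => is_leaf N' v) (nodes N') lo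
   (fun v Hv Hl => Rmax_lub_lt _ _ _ (Hlf v g Hv gN' Hl gnl') (Hlf v q Hv qN' Hl qnl')).
have [s [Hs1 Hs2]] := set_fresh t' (nodes N') Hhi1.
pose t v := if (v == px) || (v == py) then s else t' v.
have tpx : t px = s by rewrite /t eqxx.
have tpy : t py = s by rewrite /t eqxx orbT.
have tE v : v \in nodes N' -> t v = t' v.
  by rewrite inN' => /and3P [H1' H2' _]; rewrite /t (negbTE H1') (negbTE H2').
have Hty' := Hhi2 y yN' yleaf'.
have Htx' := Hhi2 x xN' xleaf'.
exists t; split; [split; [|split]|split].
- move=> a b Hab.
  case: (eqVneq a py) => [Ea|aNpy].
    subst a; move: Hab; rewrite Hpyb => /orP [/eqP Eb|/eqP Eb]; subst b.
    + by rewrite tpx tpy; split; [lra|].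
    + rewrite tpy (tE y yN'); split; [lra| move=> E; lra].
  case: (eqVneq a px) => [Ea|aNpx].
    subst a; move: Hab; rewrite Hpxb => /eqP Eb; subst b.
    rewrite tpx (tE x xN'); split; [lra| move=> E; lra].
  case: (eqVneq b py) => [Eb|bNpy].
    subst b; have /eqP Ea : a == g by rewrite -Hapy.
    subst a; rewrite tpy (tE g gN'); split; [lra|move=> E; lra].
  case: (eqVneq b px) => [Eb|bNpx].
    subst b; move: Hab; rewrite Hapx (negbTE aNpy) /= => /eqP Ea.
    subst a; rewrite tpx (tE q qN'); split; [lra|move=> E; lra].
  have [aN bN] := Hin _ _ Hab.
  have aN' := inN'2 a aN aNpx aNpy.
  have bN' := inN'2 b bN bNpx bNpy.
  have Hab' : narc N' a b by rewrite HaN' Hab aNpy bNpy aNpx bNpx.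
  rewrite (tE a aN') (tE b bN'); have [_ _ <- _] := Hty b bN'.
  exact: H1 _ _ Hab'.
- move=> u uN Hul.
  case: (eqVneq u py) => [->|uNpy].
    by exists y; split => //; rewrite tpy (tE y yN'); lra.
  case: (eqVneq u px) => [->|uNpx].
    by exists x; split => //; rewrite tpx (tE x xN'); lra.
  have uN' := inN'2 u uN uNpx uNpy.
  have Hul' : ~~ is_leaf N' u by have [_ _ _ ->] := Hty u uN'.
  have [v [Huv Htv]] := H2 u uN' Hul'.
  rewrite (tE u uN').
  have Huv2 := Huv.
  move: Huv; rewrite HaN' => /orP [/orP [Huv|/andP [/eqP Eu /eqP Ev]]| /andP [/eqP Eu /eqP Ev]].
  + have vN' : v \in nodes N' := ((HG'.1).1 _ _ Huv2).2.
    move/andP: Huv => [/andP [/andP [/andP [Huv _] _] _] _].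
    by exists v; split => //; rewrite (tE v vN').
  + subst u; exists py; split => //; rewrite tpy; lra.
  + subst u; exists px; split => //; rewrite tpx; lra.
- move=> r u v Hr Hur Hvr Huv.
  case: (eqVneq r px) => [Er|rNpx].
    subst r; rewrite tpx.
    have Hq : t q = t' q by apply: tE.
    move: Hur Hvr; rewrite !Hapx => /orP [/eqP Eu|/eqP Eu] /orP [/eqP Ev|/eqP Ev];
      subst u v => //; rewrite ?tpy ?Hq; split => // E; lra.
  have rNpy : r != py.
    by apply/eqP => E; subst r; have := tree_not_ret Hpy; rewrite Hr.
  have rNx : r != x.
    by apply/eqP => E; subst r; apply: Huv; move: Hur Hvr; rewrite !Hax => /eqP -> /eqP ->.
  have rNy : r != y.
    by apply/eqP => E; subst r; apply: Huv; move: Hur Hvr; rewrite !Hay => /eqP -> /eqP ->.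
  have aux w : narc N w r -> [/\ w \in nodes N', narc N' w r & t w = t' w].
    move=> Hwr.
    have wNpy : w != py by apply/eqP => E; move: Hwr; rewrite E Hpyb (negbTE rNpx) (negbTE rNy).
    have wNpx : w != px by apply/eqP => E; move: Hwr; rewrite E Hpxb (negbTE rNx).
    have wN' := inN'2 w (Hin _ _ Hwr).1 wNpx wNpy.
    split => //; [by rewrite HaN' Hwr wNpy rNpy wNpx rNpx|exact: tE].
  have rN' := inN'2 r (Hin _ _ Hur).2 rNpx rNpy.
  have [uN' Hur' ->] := aux u Hur.
  have [vN' Hvr' ->] := aux v Hvr.
  rewrite (tE r rN').
  apply: (H3 r u v) => //.
  by have [_ _ -> _] := Hty r rN'.
- have spec a b : b \in nodes N -> (a == px) || (a == py) -> b != px -> b != py -> t a <> t b.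
    move=> bN Ha bNpx bNpy.
    have bN' := inN'2 b bN bNpx bNpy.
    have -> : t a = s by rewrite /t Ha.
    by rewrite (tE b bN'); move=> E; apply: (Hs2 b bN'); rewrite E.
  move=> a b aN bN Hab Htab.
  case: (boolP ((a == px) || (a == py))) => Ha.
    case: (boolP ((b == px) || (b == py))) => Hb.
      case/orP: Ha => /eqP Ea; case/orP: Hb => /eqP Eb; subst a b => //.
      * by right.
      * by left.
    rewrite negb_or in Hb; move/andP: Hb => [bNpx bNpy].
    by exfalso; exact: (spec a b bN Ha bNpx bNpy Htab).
  case: (boolP ((b == px) || (b == py))) => Hb.
    rewrite negb_or in Ha; move/andP: Ha => [aNpx aNpy].
    by exfalso; apply: (spec b a aN Hb aNpx aNpy); rewrite Htab.
  rewrite negb_or in Ha; rewrite negb_or in Hb.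
  move/andP: Ha => [aNpx aNpy]; move/andP: Hb => [bNpx bNpy].
  have aN' := inN'2 a aN aNpx aNpy.
  have bN' := inN'2 b bN bNpx bNpy.
  rewrite (tE a aN') (tE b bN') in Htab.
  have Hconv u w : narc N' u w -> is_ret N' w -> narc N u w.
    rewrite HaN' => /orP [/orP [H|/andP [_ /eqP Ew]]|/andP [_ /eqP Ew]] Hr.
    + by move/andP: H => [/andP [/andP [/andP [H _] _] _] _].
    + by subst w; have := ret_not_leaf Hr; rewrite yleaf'.
    + by subst w; have := ret_not_leaf Hr; rewrite xleaf'.
  have [_ Ta Ra _] := Hty a aN'; have [_ Tb Rb _] := Hty b bN'.
  case: (Hex a b aN' bN' Hab Htab) => [[Hab' [Ht Hr]]|[Hba' [Ht Hr]]]; [left|right].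
  + by rewrite -Ta -Rb; split => //; apply: Hconv.
  + by rewrite -Tb -Ra; split => //; apply: Hconv.
- move=> a b aN bN Hla Hlb.
  have aNpx : a != px by apply/eqP => E; subst a; have := ret_not_leaf Hpx; rewrite Hla.
  have aNpy : a != py by apply/eqP => E; subst a; have := tree_not_leaf Hpy; rewrite Hla.
  have aN' := inN'2 a aN aNpx aNpy.
  have Hla' : is_leaf N' a by have [_ _ _ ->] := Hty a aN'.
  rewrite (tE a aN').
  have Ha := Hhi2 a aN' Hla'.
  case: (eqVneq b px) => [->|bNpx]; first by rewrite tpx; lra.
  case: (eqVneq b py) => [->|bNpy]; first by rewrite tpy; lra.
  have bN' := inN'2 b bN bNpx bNpy.
  rewrite (tE b bN'); apply: Hlf => //.
  by have [_ _ _ ->] := Hty b bN'.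
Qed.

Lemma card1_eq (V : finType) (A : {set V}) a : #|A| = 1 -> a \in A -> forall b, (b \in A) = (b == a).
Proof.
move/eqP/cards1P => [c ->]; rewrite in_set1 => /eqP -> b; by rewrite in_set1.
Qed.

Lemma card2_eq (V : finType) (A : {set V}) a b : #|A| = 2 -> a \in A -> b \in A -> a != b ->
  forall c, (c \in A) = (c == a) || (c == b).
Proof.
move=> HA Ha Hb Hab.
have E : [set a; b] == A.
  rewrite eqEcard cards2 Hab HA leqnn andbT; apply/subsetP => z; rewrite !inE.
  by case/orP => /eqP ->.
by move=> c; rewrite -(eqP E) !inE.
Qed.

Lemma parentP (V : finType) (N : net V) x p : parent N x = Some p -> narc N p x.
Proof. by rewrite /parent; case: pickP => // z Hz [<-]. Qed.

Lemma indeg1P (V : finType) (N : net V) v : indeg N v = 1 -> exists g, forall a, narc N a v = (a == g).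
Proof.
move=> /eqP/cards1P [g Hg]; exists g => a.
by have := congr1 (fun A : {set V} => a \in A) Hg; rewrite /= !inE.
Qed.

Lemma two_children (V : finType) (N : net V) v a b : good N -> narc N v a -> narc N v b -> a != b ->
  [/\ is_tree_node N v, indeg N v = 1 & forall c, narc N v c = (c == a) || (c == b)].
Proof.
move=> [HN Hbin] Ha Hb Hab.
have vN : v \in nodes N by have [] := HN.1 _ _ Ha.
have H2 : 2 <= outdeg N v.
  apply: (@leq_trans #|[set a; b]|); first by rewrite cards2 Hab.
  apply: subset_leq_card; apply/subsetP => z; rewrite !inE.
  by case/orP => /eqP ->.
have Ht : is_tree_node N v.
  have [_ [_ [Hty _]]] := HN.
  move: (Hty v vN); rewrite /is_root /is_ret /is_leaf.
  case/or4P => // /and3P [_ _ /eqP E]; by rewrite E in H2.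
have := Hbin v; rewrite Ht => /(_ isT) E3.
have Ht' := Ht; move: Ht'; rewrite /is_tree_node => /and3P [_ /eqP I1 _].
split => //.
move=> c; rewrite I1 in E3.
have O2 : outdeg N v = 2 by lia.
have := card2_eq O2 (a := a) (b := b); rewrite !inE => /(_ Ha Hb Hab) H.
by have := H c; rewrite inE.
Qed.

Lemma leaf_parent (V : finType) (N : net V) x p : is_leaf N x -> narc N p x ->
  forall a, narc N a x = (a == p).
Proof.
move=> /and3P [_ /eqP I1 _] Hp a.
have := card1_eq I1 (a := p); rewrite inE => /(_ Hp) H.
by have := H a; rewrite inE.
Qed.

Lemma step (V : finType) (N : net V) xy : good N ->
  good (reduce N xy) /\ (forall t', Label (reduce N xy) t' -> exists t, Label N t).
Proof.
move=> HG; have triv : good N /\ (forall t', Label N t' -> exists t, Label N t).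
  by split => // t' H; exists t'.
case: xy => x y; rewrite /reduce.
case Hpx: (parent N x) => [px|] //; case Hpy: (parent N y) => [py|] //.
case: ifP => [/and3P [Hx Hy Hxy]|_] //.
have Hpxx := parentP Hpx; have Hpyy := parentP Hpy.
have HN := HG.1.
have Hax := leaf_parent Hx Hpxx.
have Hay := leaf_parent Hy Hpyy.
have Hxb b := leaf_nochild b Hx.
have Hyb b := leaf_nochild b Hy.
case: ifP => [/eqP Epp|Hpp].
- subst py.
  have [Hp I1 Hpb] := two_children HG Hpxx Hpyy Hxy.
  have [g Hap] := indeg1P I1.
  have pNx : px != x := noloop HN Hpxx.
  have Hgp : narc N g px by rewrite Hap.
  have gNx : g != x by apply/eqP => E; have := Hxb px; rewrite -E Hgp.
  rewrite (@suppress_eq _ _ px g y).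
  + set N' := Net _ _.
    have HnN' : nodes N' = nodes N :\ x :\ px by [].
    have HaN' a b : narc N' a b = (narc N a b && (a != px) && (b != px)) || ((a == g) && (b == y)).
      rewrite /N' /=; congr (_ || _).
      case Hab: (narc N a b) => //=.
      case: (eqVneq a px) => [->|aNpx]; first by rewrite !andbF.
      have aNx : a != x by apply/eqP => E; rewrite E Hxb in Hab.
      have bNx : b != x by apply/eqP => E; rewrite E Hax in Hab; rewrite Hab in aNpx.
      by rewrite aNx bNx.
    split; first by have [] := cherry_good HG Hx Hy Hxy Hax Hay Hpb Hap Hp HnN' HaN'.
    exact: cherry_label HG Hx Hy Hxy Hax Hay Hpb Hap Hp HnN' HaN'.
  + by rewrite /= in_setD1 pNx; have [] := HN.1 _ _ Hpxx.
  + by move=> a /=; rewrite Hap; case: (eqVneq a g) => [->|]; bs.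
  + by move=> b /=; rewrite Hpb (negbTE pNx); case: (eqVneq b x) => [->|bNx]; bs.
- case: ifP => [/andP [Hpxr Hpypx]|_] //.
  have pxNpy : px != py by rewrite Hpp.
  have pxNy : px != y by apply/eqP => E; have := Hyb x; rewrite -E Hpxx.
  have [Hpyt I1 Hpyb] := two_children HG Hpypx Hpyy pxNy.
  have [g Hapy] := indeg1P I1.
  have [pxN Ipx Opx] := and3P Hpxr.
  have Ipx2 : indeg N px = 2.
    have := HG.2 px; rewrite Hpxr orbT => /(_ isT); move/eqP: Opx => ->; lia.
  have Hpxb b : narc N px b = (b == x).
    move/eqP: Opx => Opx; have := card1_eq Opx (a := x); rewrite inE => /(_ Hpxx) H.
    by have := H b; rewrite inE.
  have : #|[set a | narc N a px] :\ py| = 1.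
    move: Ipx2; rewrite /indeg (cardsD1 py) inE Hpypx /=; lia.
  move/eqP/cards1P => [q Hq].
  have qNpy : q != py by have := congr1 (fun A : {set V} => q \in A) Hq; rewrite /= !inE eqxx => /andP [].
  have Hapx a : narc N a px = (a == py) || (a == q).
    have := congr1 (fun A : {set V} => a \in A) Hq; rewrite /= !inE.
    by case: (eqVneq a py) => [->|] //= ->.
  have pyNx : py != x by apply/eqP => E; have := Hxb px; rewrite -E Hpypx.
  have pxNx : px != x := noloop HN Hpxx.
  have pyNy : py != y := noloop HN Hpyy.
  have Hgpy : narc N g py by rewrite Hapy.
  have gNpy : g != py := noloop HN Hgpy.
  have gNpx : g != px.
    apply/eqP => E; have Hg' := Hgpy; rewrite E in Hg'.
    have := acyc HN (connect1 Hpypx) (connect1 Hg').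
    by move=> E2; rewrite E2 eqxx in pxNpy.
  have pyN : py \in nodes N by have [] := HN.1 _ _ Hpyy.
  rewrite (@suppress_eq _ _ py g y); first last.
  + move=> b /=; rewrite Hpyb xpair_eqE eqxx /=.
    by case: (eqVneq b px) => [->|bNpx]; bs.
  + move=> a /=; rewrite Hapy xpair_eqE; bs.
  + by [].
  + by [].
  set M := Net _ _.
  rewrite (@suppress_eq _ M px q x); first last.
  + move=> b; rewrite /M /= Hpxb xpair_eqE.
    by case: (eqVneq b x) => [->|bNx]; bs.
  + move=> a; rewrite /M /= Hapx xpair_eqE.
    by case: (eqVneq a py) => [->|aNpy]; bs.
  + by rewrite /M /= in_setD1 pxNpy.
  set N' := Net _ _.
  have HnN' : nodes N' = nodes N :\ py :\ px by [].
  have HaN' a b : narc N' a b = (narc N a b && (a != py) && (b != py) && (a != px) && (b != px))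
                 || ((a == g) && (b == y)) || ((a == q) && (b == x)).
    rewrite /N' /M /= xpair_eqE; congr (_ || _).
    case: (eqVneq a py) => [->|aNpy]; first by bs.
    case: (eqVneq a px) => [->|aNpx]; first by bs.
    case: (eqVneq b px) => [->|bNpx]; first by bs.
    by bs.
  split; first by have [] := ret_good HG Hx Hy Hxy pxNpy qNpy Hax Hay Hpxb Hpyb Hapx Hapy HnN' HaN'.
  exact: ret_label HG Hx Hy Hxy pxNpy qNpy Hax Hay Hpxb Hpyb Hapx Hapy Hpxr Hpyt HnN' HaN'.
Qed.

Lemma main_ind (V : finType) (S : seq (V * V)) : forall (N : net V), good N ->
  is_tree (reduce_seq N S) -> exists t, Label N t.
Proof.
elim: S => [|p S IH] N HG Ht; first exact: base_label.
have [HG' Hext] := step p HG.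
have [t' Ht'] := IH _ HG' Ht.
exact: Hext t' Ht'.
Qed.

Theorem mainTheorem3 (V : finType) (N : net V) :
  is_network N -> binary N -> orchard N ->
  exists t : V -> R,
    HGT_consistent N t /\
    (forall a b : V, a \in nodes N -> b \in nodes N -> a <> b -> t a = t b ->
       (narc N a b /\ is_tree_node N a /\ is_ret N b) \/
       (narc N b a /\ is_tree_node N b /\ is_ret N a)).
Proof.
move=> HN Hb [S [Ht _]].
have [t [H1 [H2 _]]] := main_ind (conj HN Hb) Ht.
by exists t; split.
Qed.
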